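(* For every $n$ there exists a constant $C_n$ such that for any $t\ge0$, any $n\times n$ transition rate matrix $Q=(q_{ij})$ and any $\lambda>-\sum_{i=1}^n q_{ii}$, the entries of the matrix $e^{-\lambda t}e^{-Qt}$ are bounded in absolute value by $C_n$.
   Context: A transition rate matrix is a real matrix with non-negative off-diagonal entries and non-positive row sums (defective/killed chains allowed). *)

(* Defs.v *)
From HB Require Import structures.
From mathcomp Require Import all_boot all_order all_algebra.
From mathcomp Require Import all_classical all_reals all_analysis.
Set Implicit Arguments. Unset Strict Implicit. Unset Printing Implicit Defensive.
Import Order.TTheory GRing.Theory Num.Theory.
Import numFieldNormedType.Exports.
Local Open Scope ring_scope.

(* Transition rate matrix: nonnegative off-diagonal entries,
   nonpositive row sums (defective / killed chains allowed). *)
Definition rate_matrix (R : realType) (n : nat) (Q : 'M[R]_n) : Prop :=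
  (forall i j : 'I_n, i != j -> 0 <= Q i j) /\
  (forall i : 'I_n, \sum_(j < n) Q i j <= 0).

Definition expmx (R : realType) (n : nat) (A : 'M[R]_n) : 'M[R]_n :=
  \matrix_(i, j) limn (series (fun k : nat => (A ^+ k) i j / (k`!)%:R)).

(* Main.v *)
Require Import Defs.
From HB Require Import structures.
From mathcomp Require Import all_boot all_order all_algebra.
From mathcomp Require Import all_classical all_reals all_analysis.
From mathcomp Require Import lra.
Import Order.TTheory GRing.Theory Num.Theory.
Import numFieldNormedType.Exports.
Local Open Scope ring_scope.

Lemma powbound (R : realType) (n : nat) (B : 'M[R]_n) (d : 'I_n -> R) :
  (forall l j, `|B l j| <= d l) ->
  forall k i j, `|(B ^+ k) i j| <= (\sum_l d l) ^+ k.
Proof.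
move=> hB; elim=> [|k IH] i j.
  rewrite expr0 mxE; case: (i == j); by rewrite ?normr1 ?normr0.
rewrite exprSr -mulmxE mxE exprSr.
apply: le_trans (ler_norm_sum _ _ _) _.
rewrite mulr_sumr; apply: ler_sum => l _.
rewrite normrM; apply: ler_pM => //.
all: try exact: (le_trans (normr_ge0 _) (hB l j)).
Qed.

Theorem lemma4 (R : realType) (n : nat) :
  exists C : R, forall (t : R) (Q : 'M[R]_n) (lambda : R),
    0 <= t -> rate_matrix Q -> - (\sum_(i < n) Q i i) < lambda ->
    forall i j : 'I_n,
      `| (expR (- lambda * t) *: expmx (- (t *: Q))) i j | <= C.
Proof.
exists 1 => t Q lambda ht [hoff hrow] hl i j.
set B := - (t *: Q).
pose d := fun l : 'I_n => - (t * Q l l).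
have Qll0 : forall l, Q l l <= 0.
  move=> l; have := hrow l; rewrite (bigD1 l) //=.
  have : 0 <= \sum_(m < n | m != l) Q l m by apply: sumr_ge0 => m hm; apply: hoff; rewrite eq_sym.
  move=> h1 h2; lra.
have hB : forall l m, `|B l m| <= d l.
  move=> l m; rewrite /B /d !mxE normrN normrM ger0_norm //.
  have [->|hlm] := eqVneq l m.
    by rewrite ler0_norm // mulrN.
  rewrite ger0_norm; last exact: hoff.
  rewrite -mulrN; apply: ler_wpM2l => //.
  have := hrow l; rewrite (bigD1 l) //= (bigD1 m) /=; last by rewrite eq_sym.
  have : 0 <= \sum_(k < n | (k != l) && (k != m)) Q l k.
    by apply: sumr_ge0 => k /andP[hk _]; apply: hoff; rewrite eq_sym.
  move=> h1 h2; lra.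
set s := \sum_l d l.
have s0 : 0 <= s by apply: sumr_ge0 => l _; apply: le_trans (hB l l).
have hpow := @powbound R n B d hB.
pose u := fun k : nat => (B ^+ k) i j / (k`!)%:R.
have hu : forall k, `|u k| <= exp_coeff s k.
  move=> k; rewrite /u /exp_coeff /= normrM.
  rewrite [`|_^-1|]ger0_norm; last by rewrite invr_ge0.
  by apply: ler_wpM2r; [rewrite invr_ge0 | exact: hpow].
have cn : cvgn [normed series u].
  apply: (series_le_cvg (v_ := exp_coeff s)).
  - by move=> k /=.
  - by move=> k; apply: exp_coeff_ge0.
  - by move=> k /=; apply: hu.
  - exact: is_cvg_series_exp_coeff.
have hE : `|expmx B i j| <= expR s.
  rewrite /expmx mxE; apply: le_trans (lim_series_norm cn) _.
  apply: lim_series_le => //; exact: is_cvg_series_exp_coeff.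
rewrite mxE normrM ger0_norm ?expR_ge0 //.
apply: le_trans (ler_wpM2l (expR_ge0 _) hE) _.
rewrite -expRD expR_le1.
have -> : s = t * - (\sum_(i < n) Q i i).
  by rewrite /s /d mulrN mulr_sumr sumrN.
nra.
Qed.
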